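(* For every integer $k \geq 1$, let $\mathcal{c}(k)$ denote the greatest common divisor of all the sums $\sum_{i=1}^{k} c_{n+i}$, $n \geq 0$. Then $$\mathcal{c}(k) = \begin{cases} 4P_{k}, & \text{if } k \text{ is even};\\ Q_{k}, & \text{if } k \text{ is odd}.\end{cases}$$
   Context: The Pell sequence $(P_n)_{n\ge0}$ is defined by $P_0=0$, $P_1=1$, $P_n = 2P_{n-1}+P_{n-2}$. The associated Pell sequence $(Q_n)_{n\ge0}$ is defined by $Q_0=1$, $Q_1=1$, $Q_n=2Q_{n-1}+Q_{n-2}$. The Lucas-cobalancing sequence $(c_n)_{n\ge0}$ is defined by $c_0=-1$, $c_1=1$, $c_n=6c_{n-1}-c_{n-2}$. *)

(* Defs.v *)
From mathcomp Require Import all_boot all_order all_algebra.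
Set Implicit Arguments. Unset Strict Implicit. Unset Printing Implicit Defensive.
Import Order.TTheory GRing.Theory Num.Theory.
Local Open Scope ring_scope.

Fixpoint pell (n : nat) : int :=
  match n with
  | 0%N => 0
  | 1%N => 1
  | (m.+1 as n1).+1 => 2 * pell n1 + pell m
  end.

Fixpoint qpell (n : nat) : int :=
  match n with
  | 0%N => 1
  | 1%N => 1
  | (m.+1 as n1).+1 => 2 * qpell n1 + qpell m
  end.

Fixpoint lcob (n : nat) : int :=
  match n with
  | 0%N => -1
  | 1%N => 1
  | (m.+1 as n1).+1 => 6 * lcob n1 - lcob m
  end.

Definition is_gcd_of_seq (f : nat -> int) (g : int) : Prop :=
  0 <= g /\ (forall n, (g %| f n)%Z) /\
  (forall d : int, (forall n, (d %| f n)%Z) -> (d %| g)%Z).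

Definition lcob_window (k n : nat) : int := \sum_(1 <= i < k.+1) lcob (n + i).

(* Main.v *)
Require Import Defs.
From mathcomp Require Import all_boot all_order all_algebra.
From mathcomp Require Import ring zify.
Import Order.TTheory GRing.Theory Num.Theory.
Local Open Scope ring_scope.

Lemma pellSS n : pell n.+2 = 2 * pell n.+1 + pell n. Proof. by []. Qed.
Lemma qpellSS n : qpell n.+2 = 2 * qpell n.+1 + qpell n. Proof. by []. Qed.
Lemma lcobSS n : lcob n.+2 = 6 * lcob n.+1 - lcob n. Proof. by []. Qed.

Lemma PQS j : pell j.+1 = pell j + qpell j /\ qpell j.+1 = qpell j + 2 * pell j.
Proof.
elim: j => [|j [IH1 IH2]]; first by split.
rewrite pellSS qpellSS IH1 IH2; split; ring.
Qed.
Lemma PS j : pell j.+1 = pell j + qpell j. Proof. by case: (PQS j). Qed.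
Lemma QS j : qpell j.+1 = qpell j + 2 * pell j. Proof. by case: (PQS j). Qed.

Lemma normPQ j : qpell j * qpell j - 2 * (pell j * pell j) = (-1) ^+ j.
Proof.
elim: j => [|j IH]; first by [].
rewrite PS QS exprS -IH; ring.
Qed.

Lemma addPQ a b : pell (a + b)%N = pell a * qpell b + qpell a * pell b /\
  qpell (a + b)%N = qpell a * qpell b + 2 * (pell a * pell b).
Proof.
elim: b => [|b [IH1 IH2]]; first by rewrite addn0 /=; split; ring.
rewrite addnS PS QS PS QS; split; rewrite ?IH1 ?IH2; clear IH1 IH2; ring.
Qed.

Lemma nonneg j : 0 <= pell j /\ 0 <= qpell j.
Proof.
elim: j => [|j [H1 H2]]; first by [].
rewrite PS QS; split; lia.
Qed.

Lemma lcobQ j : lcob j.+1 = qpell j.*2.+1.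
Proof.
suff: lcob j.+1 = qpell j.*2.+1 /\ lcob j.+2 = qpell j.*2.+3 by case.
elim: j => [|j [IH1 IH2]]; first by split.
split; first by [].
rewrite lcobSS IH1 IH2 doubleS.
rewrite (qpellSS (j.*2.+3)) (qpellSS (j.*2.+2)) (qpellSS j.*2.+1).
ring.
Qed.

Lemma win2 k n : 2 * lcob_window k n = qpell (n + k)%N.*2 - qpell n.*2.
Proof.
rewrite /lcob_window.
elim: k => [|k IH]; first by rewrite big_geq // addn0 subrr mulr0.
rewrite big_nat_recr //= mulrDr IH.
change (lcob (n + k.+1)%R) with (lcob (n + k).+1).
rewrite addnS doubleS qpellSS lcobQ.
ring.
Qed.

Lemma main_id a k :
  qpell (a + k + k)%N = 2 * qpell k * qpell (a + k)%N - (-1) ^+ k * qpell a /\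
  qpell (a + k + k)%N = 4 * pell k * pell (a + k)%N + (-1) ^+ k * qpell a.
Proof.
have [P1 Q1] := addPQ (a + k) k.
have [P2 Q2] := addPQ a k.
rewrite Q1 P2 Q2 -normPQ; split; ring.
Qed.

Theorem theorem19 (k : nat) : (1 <= k)%N ->
  is_gcd_of_seq (lcob_window k) (if odd k then qpell k else 4 * pell k).
Proof.
move=> _.
have h2 : (2 : int) != 0 by [].
case: ifP => Hk.
- have e1 : (-1) ^+ k = -1 :> int by rewrite -signr_odd Hk.
  have HS : forall n, lcob_window k n = qpell k * qpell (n.*2 + k)%N.
    move=> n; apply: (mulfI h2); rewrite win2.
    have -> : (n + k).*2 = (n.*2 + k + k)%N by lia.
    have [-> _] := main_id n.*2 k; rewrite e1; ring.
  split; first by case: (nonneg k).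
  split; first by move=> n; rewrite HS dvdz_mulr.
  move=> d Hd.
  have /dvdzP [q0 E0] := Hd 0%N.
  have /dvdzP [q1 E1] := Hd 1%N.
  rewrite !HS in E0 E1.
  rewrite (_ : (0.*2 + k)%N = k) // in E0.
  rewrite (_ : (1.*2 + k)%N = k.+2) // QS PS QS in E1.
  have N := normPQ k; rewrite e1 in N.
  set P := pell k in E1 N *; set Q := qpell k in E0 E1 N *.
  apply/dvdzP; exists ((Q^+3 + 3 * P * (P * P - 1)) * q0 - P * (P * P - 1) * q1).
  have key : Q = (Q^+3 + 3 * P * (P * P - 1)) * (Q * Q) - P * (P * P - 1) * (Q * (Q + 2 * P + 2 * (P + Q)))
     - Q * ((Q * Q - 2 * (P * P) - -1) * (Q * Q + 2 * (P * P) - 1)).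
    ring.
  rewrite N subrr mul0r mulr0 subr0 in key.
  rewrite {1}key E0 E1; ring.
- have Hm : k = ((k./2).*2)%N by move: (odd_double_half k); rewrite Hk add0n.
  set m := k./2 in Hm.
  have e1 : (-1) ^+ k = 1 :> int by rewrite -signr_odd Hk.
  have HS : forall n, lcob_window k n = 4 * pell k * (pell (n + m)%N * qpell (n + m)%N).
    move=> n; apply: (mulfI h2); rewrite win2.
    have -> : (n + k).*2 = (n.*2 + k + k)%N by lia.
    have [_ ->] := main_id n.*2 k; rewrite e1.
    have -> : (n.*2 + k = (n + m) + (n + m))%N by lia.
    have [-> _] := addPQ (n + m) (n + m); ring.
  split; first by case: (nonneg k) => H _; lia.
  split; first by move=> n; rewrite HS dvdz_mulr.
  move=> d Hd.
  have /dvdzP [q0 E0] := Hd 0%N.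
  have /dvdzP [q1 E1] := Hd 1%N.
  rewrite !HS add0n in E0; rewrite HS add1n PS QS in E1.
  have N := normPQ m.
  set P := pell m in E1 E0 N *; set Q := qpell m in E0 E1 N *.
  set g := 4 * pell k in E0 E1 *.
  set Y := Q * Q + 2 * (P * P).
  apply/dvdzP; exists ((- 3 * Y - 8 * (P * Q)) * q0 + Y * q1).
  have key : g = (- 3 * Y - 8 * (P * Q)) * (g * (P * Q)) + Y * (g * ((P + Q) * (Q + 2 * P)))
     - g * ((Q * Q - 2 * (P * P) - (-1) ^+ m) * (Q * Q - 2 * (P * P) + (-1) ^+ m)
            + ((-1) ^+ m * (-1) ^+ m - 1)).
    rewrite /Y; ring.
  have s2 : (-1) ^+ m * (-1) ^+ m = 1 :> int by rewrite -expr2 sqrr_sign.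
  rewrite N subrr mul0r s2 subrr ?addr0 mulr0 subr0 in key.
  rewrite {1}key E0 E1; ring.
Qed.
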